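(* Let $X$ be either $c_0$ or $\ell^p$ for some $1\le p<\infty$ (complex sequences indexed by $n\ge 0$). There exists a bounded sequence $w=(w_n)_{n\ge 0}$ of positive real numbers such that the weighted backward shift $B_w$ on $X$ is strongly topologically transitive but not mixing.
   Context: For a bounded sequence $w=(w_n)_{n\ge0}$ of positive numbers, the weighted backward shift $B_w$ on $X$ is the bounded linear operator defined on the canonical basis $(e_n)_{n\ge0}$ by $B_we_0=0$ and $B_we_n=w_ne_{n-1}$ for $n\ge1$. For an operator $T$ on a topological vector space $X$ and nonempty open sets $U,V\subseteq X$, let $N(U,V)=\{n\in\mathbb{N}_0: T^n(U)\cap V\neq\emptyset\}$. $T$ is mixing if $N(U,V)$ is cofinite for all nonempty open $U,V$. $T$ is strongly topologically transitive if for every nonempty open $U\subseteq X$, $X\setminus\{0\}\subseteq\bigcup_{n=0}^\infty T^n(U)$. *)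

(* Defs.v *)
From Stdlib Require Import Reals.
From Coquelicot Require Import Coquelicot.
Open Scope R_scope.

(* |a|^p for a >= 0, with the convention 0^p = 0 (Stdlib's Rpower 0 p = 1). *)
Definition rpow (a p : R) : R :=
  if Req_EM_T a 0 then 0 else Rpower a p.

Inductive seqspace : Type :=
  | c0 : seqspace
  | lp : R -> seqspace.

Definition inX (S : seqspace) (x : nat -> C) : Prop :=
  match S with
  | c0 => is_lim_seq (fun n => Cmod (x n)) 0
  | lp p => ex_series (fun n => rpow (Cmod (x n)) p)
  end.

Definition normX (S : seqspace) (x : nat -> C) : R :=
  match S with
  | c0 => real (Lub_Rbar (fun r => exists n, r = Cmod (x n)))
  | lp p => rpow (Series (fun n => rpow (Cmod (x n)) p)) (/ p)
  end.

Definition seq_sub (x y : nat -> C) : nat -> C := fun n => Cminus (x n) (y n).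

Definition openX (S : seqspace) (U : (nat -> C) -> Prop) : Prop :=
  (forall x, U x -> inX S x) /\
  (forall x, U x -> exists e, 0 < e /\
     forall y, inX S y -> normX S (seq_sub y x) < e -> U y).

Definition nonempty (U : (nat -> C) -> Prop) : Prop := exists x, U x.

(* Weighted backward shift: B_w e_0 = 0, B_w e_n = w_n e_{n-1},
   i.e. (B_w x)_m = w_{m+1} x_{m+1}. *)
Definition Bw (w : nat -> R) (x : nat -> C) : nat -> C :=
  fun m => Cmult (RtoC (w (S m))) (x (S m)).

Definition hits (T : (nat -> C) -> (nat -> C)) (U V : (nat -> C) -> Prop) (n : nat) : Prop :=
  exists x, U x /\ V (Nat.iter n T x).

Definition mixing (S : seqspace) (T : (nat -> C) -> (nat -> C)) : Prop :=
  forall U V, openX S U -> nonempty U -> openX S V -> nonempty V ->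
    exists N, forall n, (N <= n)%nat -> hits T U V n.

Definition strongly_tt (S : seqspace) (T : (nat -> C) -> (nat -> C)) : Prop :=
  forall U, openX S U -> nonempty U ->
    forall y, inX S y -> y <> (fun _ => RtoC 0) ->
      exists n x, U x /\ Nat.iter n T x = y.

(* Main.v *)
Require Import Defs.
From Stdlib Require Import Reals Lia Lra Arith FunctionalExtensionality.
From Coquelicot Require Import Coquelicot.
Local Open Scope nat_scope.

Fixpoint nn (i : nat) : nat :=
  match i with
  | O => 1%nat
  | S i' => ((i' + 2) * nn i' + 2 * i' + 2)%nat
  end.

Lemma nn_pos i : (1 <= nn i)%nat.
Proof. induction i; simpl; nia. Qed.

Lemma nn_2i i : (2 * i <= nn i)%nat.
Proof. induction i; simpl; nia. Qed.

Lemma nn_step i : ((i+1) * nn i + (i + 1) <= nn (S i))%nat.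
Proof. simpl. nia. Qed.

Lemma nn_mono i j : (i <= j)%nat -> (nn i <= nn j)%nat.
Proof.
  induction 1; [lia|]. pose proof (nn_step m). nia.
Qed.

Lemma nn_R2 i j : (i < j)%nat -> ((i+1) * nn i <= nn j)%nat.
Proof.
  intros H. pose proof (nn_step i). pose proof (nn_mono (S i) j H). nia.
Qed.

Lemma nn_R3 j i : (j < i)%nat -> ((j+1) * nn j + i <= nn i)%nat.
Proof.
  induction 1.
  - pose proof (nn_step j). lia.
  - simpl. pose proof (nn_pos m). nia.
Qed.

Definition g (i m : nat) : nat := Nat.min (m + i - nn i) (i + 1 - m / nn i).

Lemma g_step i m : (g i (S m) <= g i m + 1)%nat.
Proof.
  unfold g. pose proof (nn_pos i).
  assert (m / nn i <= S m / nn i)%nat by (apply Nat.Div0.div_le_mono; lia).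
  lia.
Qed.

Lemma g_shift i m d : (d <= nn i)%nat -> (g i m <= g i (m + d) + 1)%nat.
Proof.
  intros Hd. unfold g. pose proof (nn_pos i).
  assert ((m + d) / nn i <= m / nn i + 1)%nat.
  { assert ((m + d) / nn i <= (m + 1 * nn i) / nn i)%nat by (apply Nat.Div0.div_le_mono; lia).
    rewrite Nat.div_add in H0 by lia. lia. }
  lia.
Qed.

Lemma g_le_i i m : (g i m <= i)%nat.
Proof. unfold g. pose proof (nn_pos i). destruct (lt_dec m (nn i)); [lia|].
  assert (1 <= m / nn i)%nat by (apply Nat.div_le_lower_bound; lia). lia. Qed.

Lemma g_le_m i m : (g i m <= m)%nat.
Proof. unfold g. pose proof (nn_2i i). lia. Qed.

Lemma g_big j m : (m < nn j)%nat -> g j (m + nn j) = j.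
Proof.
  intros H. unfold g. pose proof (nn_pos j).
  replace (m + nn j) with (m + 1 * nn j)%nat by lia.
  rewrite Nat.div_add by lia. rewrite Nat.div_small by lia. lia.
Qed.

Lemma g_zero_large i m : (m < i)%nat -> g i m = 0%nat.
Proof. intros H. unfold g. pose proof (nn_2i i). lia. Qed.

Lemma g_zero_past i m : ((i+1) * nn i <= m)%nat -> g i m = 0%nat.
Proof.
  intros H. unfold g. pose proof (nn_pos i).
  assert (i + 1 <= m / nn i)%nat.
  { apply Nat.div_le_lower_bound; lia. }
  lia.
Qed.

Lemma g_ret i j : g i ((j+1) * nn j) = 0%nat.
Proof.
  destruct (lt_eq_lt_dec i j) as [[H|H]|H].
  - apply g_zero_past. pose proof (nn_R2 i j H). nia.
  - subst. apply g_zero_past. lia.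
  - unfold g. pose proof (nn_R3 j i H). lia.
Qed.

Fixpoint F (k m : nat) : nat :=
  match k with O => O | S k' => Nat.max (F k' m) (g k' m) end.

Lemma F_ge k m i : (i < k)%nat -> (g i m <= F k m)%nat.
Proof.
  induction k; simpl; intros H; [lia|].
  destruct (Nat.eq_dec i k); [subst; lia|]. specialize (IHk ltac:(lia)). lia.
Qed.

Lemma F_le k m B : (forall i, (g i m <= B)%nat) -> (F k m <= B)%nat.
Proof. intros H; induction k; simpl; [lia|]. specialize (H k). lia. Qed.

Definition f (m : nat) : nat := F (S m) m.

Lemma f_ge i m : (g i m <= f m)%nat.
Proof.
  unfold f. destruct (le_lt_dec i m).
  - apply F_ge; lia.
  - rewrite g_zero_large by lia. lia.
Qed.

Lemma f_le m B : (forall i, (g i m <= B)%nat) -> (f m <= B)%nat.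
Proof. intros; apply F_le; auto. Qed.

Lemma f_step m : (f (S m) <= f m + 1)%nat.
Proof. apply f_le. intros i. pose proof (g_step i m). pose proof (f_ge i m). lia. Qed.

Lemma f_shift j m : (f m <= f (m + nn j) + 1)%nat.
Proof.
  apply f_le. intros i. destruct (le_lt_dec j i).
  - pose proof (g_shift i m (nn j) (nn_mono _ _ l)). pose proof (f_ge i (m + nn j)). lia.
  - destruct (lt_dec m (nn j)).
    + pose proof (g_le_i i m). pose proof (g_big j m l0). pose proof (f_ge j (m + nn j)). lia.
    + rewrite g_zero_past; [lia|]. pose proof (nn_R2 i j l). lia.
Qed.

Lemma f_zero j : f ((j+1) * nn j) = 0%nat.
Proof. apply Nat.le_0_r. apply f_le. intros i. rewrite g_ret. lia. Qed.

Lemma f_le_m m : (f m <= m)%nat.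
Proof. apply f_le. intros i; apply g_le_m. Qed.

Lemma f_big j m : (m < nn j)%nat -> (j <= f (m + nn j))%nat.
Proof. intros H. rewrite <- (g_big j m H) at 1. apply f_ge. Qed.

Lemma f_0 : f 0 = 0%nat.
Proof. pose proof (f_le_m 0). lia. Qed.
Open Scope R_scope.

Definition W (m : nat) : R := 2 ^ (f m).
Definition ww (k : nat) : R := match k with O => 1 | S k' => W (S k') / W k' end.

Lemma W_pos m : 0 < W m.
Proof. unfold W. apply pow_lt. lra. Qed.

Lemma W_0 : W 0 = 1.
Proof. unfold W. rewrite f_0. simpl. lra. Qed.

Lemma ww_pos k : 0 < ww k.
Proof. destruct k; simpl; [lra|]. pose proof (W_pos (S k)); pose proof (W_pos k).
  apply Rdiv_lt_0_compat; auto. Qed.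

Lemma pow2_le a b : (a <= b)%nat -> 2 ^ a <= 2 ^ b.
Proof. intros; apply Rle_pow; [lra|auto]. Qed.

Lemma ww_le k : ww k <= 2.
Proof. destruct k; simpl; [lra|]. pose proof (W_pos k). unfold W in *.
  apply Rle_div_l; auto. pose proof (f_step k).
  replace (2 * 2 ^ f k) with (2 ^ (f k + 1)) by (rewrite pow_add; simpl; lra).
  apply pow2_le; lia. Qed.

Lemma iter_formula n x m :
  Nat.iter n (Bw ww) x m = Cmult (RtoC (W (m + n) / W m)) (x (m + n)%nat).
Proof.
  revert m. induction n; intros m.
  - simpl. rewrite Nat.add_0_r. pose proof (W_pos m).
    replace (W m / W m) with 1 by (field; lra). rewrite Cmult_1_l. reflexivity.
  - rewrite Nat.iter_succ. unfold Bw at 1. rewrite IHn.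
    rewrite Cmult_assoc. rewrite <- RtoC_mult. simpl ww.
    replace (S m + n)%nat with (m + S n)%nat by lia.
    pose proof (W_pos m); pose proof (W_pos (S m)).
    f_equal. f_equal. field. lra.
Qed.

Lemma HH K d : 0 < d -> exists n, (K <= n)%nat /\ (forall m, W m / W (m + n) <= 2) /\
   (forall m, (m < K)%nat -> W m / W (m + n) <= d).
Proof.
  intros Hd. destruct (INR_unbounded (2 ^ K / d)) as [j0 Hj0].
  set (j := (j0 + K)%nat).
  assert (Hj : 2 ^ K / d <= 2 ^ j).
  { assert (INR j0 <= 2 ^ j0).
    { clear. induction j0; [simpl; lra|]. rewrite S_INR. change (2 ^ S j0) with (2 * 2 ^ j0).
      assert (1 <= 2 ^ j0) by (apply pow_R1_Rle; lra). lra. }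
    assert (2 ^ j0 <= 2 ^ j) by (apply pow2_le; unfold j; lia). lra. }
  exists (nn j). split; [pose proof (nn_2i j); unfold j in *; lia|]. split.
  - intros m. pose proof (W_pos m); pose proof (W_pos (m + nn j)).
    apply Rle_div_l; auto. unfold W. pose proof (f_shift j m).
    replace (2 * 2 ^ f (m + nn j)) with (2 ^ (f (m + nn j) + 1)) by (rewrite pow_add; simpl; lra).
    apply pow2_le; lia.
  - intros m Hm. pose proof (W_pos m); pose proof (W_pos (m + nn j)).
    apply Rle_div_l; auto.
    assert (W m <= 2 ^ K) by (unfold W; apply pow2_le; pose proof (f_le_m m); lia).
    assert (2 ^ j <= W (m + nn j)).
    { unfold W; apply pow2_le; apply f_big. pose proof (nn_2i j). unfold j in *; lia. }
    assert (2 ^ K <= d * 2 ^ j).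
    { apply Rle_div_l in Hj; auto. lra. }
    nra.
Qed.

Lemma returns N : exists r, (N <= r)%nat /\ W r = 1.
Proof.
  exists ((N + 1) * nn N)%nat. split.
  - pose proof (nn_pos N). nia.
  - unfold W. rewrite f_zero. simpl. reflexivity.
Qed.
Lemma rpow_ge0 a q : 0 <= rpow a q.
Proof. unfold rpow. destruct (Req_EM_T a 0); [lra|]. unfold Rpower. left; apply exp_pos. Qed.

Lemma rpow_0 q : rpow 0 q = 0.
Proof. unfold rpow. destruct (Req_EM_T 0 0); [lra|congruence]. Qed.

Lemma rpow_pos a q : 0 < a -> rpow a q = Rpower a q.
Proof. intros. unfold rpow. destruct (Req_EM_T a 0); [lra|auto]. Qed.

Lemma rpow_1 q : rpow 1 q = 1.
Proof. rewrite rpow_pos by lra. unfold Rpower. rewrite ln_1, Rmult_0_r. apply exp_0. Qed.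

Lemma rpow_lt a b q : 0 < q -> 0 <= a < b -> rpow a q < rpow b q.
Proof.
  intros Hq [Ha Hab]. rewrite (rpow_pos b) by lra.
  destruct (Req_dec a 0) as [->|Hn].
  - rewrite rpow_0. unfold Rpower. apply exp_pos.
  - rewrite rpow_pos by lra. apply Rlt_Rpower_l; lra.
Qed.

Lemma rpow_le a b q : 0 < q -> 0 <= a <= b -> rpow a q <= rpow b q.
Proof.
  intros Hq [Ha Hab]. destruct Hab as [H|H]; [left; apply rpow_lt; lra|subst; lra].
Qed.

Lemma rpow_mult a b q : 0 <= a -> 0 <= b -> rpow (a * b) q = rpow a q * rpow b q.
Proof.
  intros Ha Hb. destruct (Req_dec a 0) as [->|Hna]; [rewrite Rmult_0_l, !rpow_0; lra|].
  destruct (Req_dec b 0) as [->|Hnb]; [rewrite Rmult_0_r, !rpow_0; lra|].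
  rewrite !rpow_pos by nra. rewrite Rpower_mult_distr; auto; lra.
Qed.

Lemma rpow_inv a q : 0 < q -> 0 <= a -> rpow (rpow a q) (/ q) = a.
Proof.
  intros Hq Ha. destruct (Req_dec a 0) as [->|Hn]; [rewrite !rpow_0; auto|].
  rewrite (rpow_pos a) by lra. rewrite rpow_pos by (unfold Rpower; apply exp_pos).
  rewrite Rpower_mult. replace (q * / q) with 1 by (field; lra). apply Rpower_1; lra.
Qed.

Lemma rpow_small a p : 1 <= p -> 0 <= a <= 1 -> rpow a p <= a.
Proof.
  intros Hp [Ha Ha1]. destruct (Req_dec a 0) as [->|Hn]; [rewrite rpow_0; lra|].
  rewrite rpow_pos by lra. unfold Rpower.
  assert (ln a <= 0) by (rewrite <- ln_1; apply ln_le; lra).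
  rewrite <- (exp_ln a) at 2 by lra.
  assert (p * ln a <= ln a) by nra. destruct H0 as [H0|H0]; [left; apply exp_increasing; auto|rewrite H0; lra].
Qed.

Lemma rpow_2pos p : 0 < rpow 2 p.
Proof. rewrite rpow_pos by lra. unfold Rpower; apply exp_pos. Qed.

Lemma rpow_sum a b p : 0 < p -> 0 <= a -> 0 <= b ->
  rpow (a + b) p <= rpow 2 p * (rpow a p + rpow b p).
Proof.
  intros Hp Ha Hb.
  assert (rpow (a + b) p <= rpow (2 * Rmax a b) p).
  { apply rpow_le; auto. split; [lra|]. unfold Rmax; destruct (Rle_dec a b); lra. }
  rewrite rpow_mult in H by (unfold Rmax; destruct (Rle_dec a b); lra).
  assert (rpow (Rmax a b) p <= rpow a p + rpow b p).
  { pose proof (rpow_ge0 a p); pose proof (rpow_ge0 b p).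
    unfold Rmax; destruct (Rle_dec a b); lra. }
  pose proof (rpow_2pos p). nra.
Qed.
Lemma sum_zero (a : nat -> R) N : (forall k, (k <= N)%nat -> a k = 0) -> sum_f_R0 a N = 0.
Proof.
  induction N; intros H; simpl.
  - apply H; lia.
  - rewrite IHN by (intros; apply H; lia). rewrite H by lia. lra.
Qed.

Lemma sum_ge_term (a : nat -> R) k : (forall k, 0 <= a k) -> a k <= sum_f_R0 a k.
Proof.
  intros H. destruct k; simpl; [lra|].
  assert (forall N, 0 <= sum_f_R0 a N).
  { induction N; simpl; [apply H|]. specialize (H (S N)). lra. }
  specialize (H0 k). lra.
Qed.

Lemma Series_nonneg (a : nat -> R) : (forall k, 0 <= a k) -> ex_series a -> 0 <= Series a.
Proof.
  intros H He.
  assert (Series (fun _ => 0) = 0).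
  { rewrite (Series_ext (fun _ => 0) (fun n => 0 * a n)) by (intros; ring).
    rewrite Series_scal_l. ring. }
  rewrite <- H0. apply Series_le; auto. intros; split; [lra|auto].
Qed.

Lemma Series_split (a : nat -> R) N : ex_series a ->
  Series a = sum_f_R0 a N + Series (fun k => a (S N + k)%nat).
Proof. intros He. rewrite (Series_incr_n a (S N)) by (lia || auto). reflexivity. Qed.

Lemma ex_series_tail (a : nat -> R) N : ex_series a -> ex_series (fun k => a (N + k)%nat).
Proof. intros He. apply (ex_series_incr_n a N). auto. Qed.

Lemma term_le_Series (a : nat -> R) k : (forall k, 0 <= a k) -> ex_series a -> a k <= Series a.
Proof.
  intros H He. rewrite (Series_split a k He).
  pose proof (sum_ge_term a k H).
  pose proof (Series_nonneg (fun j => a (S k + j)%nat) (fun j => H _) (ex_series_tail a (S k) He)).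
  lra.
Qed.

Lemma tail_small (a : nat -> R) : (forall k, 0 <= a k) -> ex_series a ->
  forall eps, 0 < eps -> exists K, forall N, (K <= N)%nat -> Series (fun k => a (N + k)%nat) < eps.
Proof.
  intros H He eps Heps.
  pose proof (Series_correct a He) as Hs. apply is_series_Reals in Hs.
  destruct (Hs eps Heps) as [N0 HN0].
  exists (S N0). intros N HN. destruct N; [lia|].
  specialize (HN0 N ltac:(lia)). unfold Rdist in HN0.
  rewrite (Series_split a N He) in HN0.
  apply Rabs_lt_between in HN0. lra.
Qed.

Lemma prefix_bound (a : nat -> R) N : exists B, forall k, (k < N)%nat -> a k <= B.
Proof.
  induction N.
  - exists 0. intros; lia.
  - destruct IHN as [B HB]. exists (Rmax B (a N)). intros k Hk.
    destruct (Nat.eq_dec k N) as [->|Hn]; [apply Rmax_r|].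
    eapply Rle_trans; [apply HB; lia|apply Rmax_l].
Qed.

Lemma lim0_bounded (a : nat -> R) : is_lim_seq a 0 -> exists B, forall k, a k <= B.
Proof.
  intros H. apply is_lim_seq_spec in H.
  destruct (H (mkposreal 1 Rlt_0_1)) as [N HN]. simpl in HN.
  destruct (prefix_bound a N) as [B HB]. exists (Rmax B 1). intros k.
  destruct (lt_dec k N).
  - eapply Rle_trans; [apply HB; auto|apply Rmax_l].
  - specialize (HN k ltac:(lia)). apply Rabs_lt_between in HN.
    eapply Rle_trans; [|apply Rmax_r]. lra.
Qed.

Lemma lim0_eventually (a : nat -> R) : is_lim_seq a 0 ->
  forall eps, 0 < eps -> exists K, forall k, (K <= k)%nat -> a k < eps.
Proof.
  intros H eps Heps. apply is_lim_seq_spec in H.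
  destruct (H (mkposreal eps Heps)) as [N HN]. exists N. intros k Hk.
  specialize (HN k Hk). simpl in HN. apply Rabs_lt_between in HN. lra.
Qed.

Lemma Lub_le (a : nat -> R) B : (forall k, 0 <= a k <= B) ->
  real (Lub_Rbar (fun r => exists n, r = a n)) <= B.
Proof.
  intros H. destruct (Lub_Rbar_correct (fun r => exists n, r = a n)) as [Hub Hl].
  assert (Hb : Rbar_le (Lub_Rbar (fun r => exists n, r = a n)) B).
  { apply Hl. intros x [n ->]. simpl. apply H. }
  assert (Ha : Rbar_le (a 0%nat) (Lub_Rbar (fun r => exists n, r = a n))).
  { apply Hub. exists 0%nat; auto. }
  destruct (Lub_Rbar (fun r => exists n, r = a n)); simpl in *; auto; try contradiction;
  pose proof (H 0%nat); lra.
Qed.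

Lemma Lub_ge (a : nat -> R) B k : (forall k, 0 <= a k <= B) ->
  a k <= real (Lub_Rbar (fun r => exists n, r = a n)).
Proof.
  intros H. destruct (Lub_Rbar_correct (fun r => exists n, r = a n)) as [Hub Hl].
  assert (Hb : Rbar_le (Lub_Rbar (fun r => exists n, r = a n)) B).
  { apply Hl. intros x [n ->]. simpl. apply H. }
  assert (Ha : Rbar_le (a k) (Lub_Rbar (fun r => exists n, r = a n))).
  { apply Hub. exists k; auto. }
  destruct (Lub_Rbar (fun r => exists n, r = a n)); simpl in *; auto; contradiction.
Qed.
Lemma ex_series_zero : ex_series (fun _ : nat => 0).
Proof.
  exists 0. apply is_series_Reals. intros eps Heps. exists 0%nat. intros n _.
  rewrite sum_zero by auto. unfold Rdist. rewrite Rminus_0_r, Rabs_R0. auto.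
Qed.

Lemma exR_plus (a b : nat -> R) : ex_series a -> ex_series b -> ex_series (fun k => a k + b k).
Proof. intros Ha Hb. exact (ex_series_plus a b Ha Hb). Qed.

Lemma exR_scal (c : R) (a : nat -> R) : ex_series a -> ex_series (fun k => c * a k).
Proof. intros Ha. exact (ex_series_scal_l c a Ha). Qed.

Lemma exR_le (a b : nat -> R) : (forall k, 0 <= a k <= b k) -> ex_series b -> ex_series a.
Proof.
  intros H Hb. apply (ex_series_le a b); auto. intros k. unfold norm; simpl.
  rewrite Rabs_pos_eq; apply H.
Qed.

Lemma Cmod_scal (r : R) (z : C) : 0 <= r -> Cmod (Cmult (RtoC r) z) = r * Cmod z.
Proof. intros. rewrite Cmod_mult, Cmod_R, Rabs_pos_eq; auto. Qed.

Lemma Cmod_sub_le (a b : C) : Cmod (Cminus a b) <= Cmod a + Cmod b.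
Proof. unfold Cminus. rewrite <- (Cmod_opp b). apply Cmod_triangle. Qed.

Lemma Cmod_add_sub (a b : C) : Cmod a <= Cmod b + Cmod (Cminus a b).
Proof.
  replace a with (Cplus b (Cminus a b)) at 1 by ring. apply Cmod_triangle.
Qed.

Definition xpre (u y : nat -> C) (n : nat) (k : nat) : C :=
  if Nat.ltb k n then u k else Cmult (RtoC (W (k - n) / W (k - n + n))) (y (k - n)%nat).

Lemma xpre_lo u y n k : (k < n)%nat -> xpre u y n k = u k.
Proof. intros H. unfold xpre. destruct (Nat.ltb_spec k n); [auto|lia]. Qed.

Lemma xpre_hi u y n m : xpre u y n (n + m) = Cmult (RtoC (W m / W (m + n))) (y m).
Proof.
  unfold xpre. destruct (Nat.ltb_spec (n + m) n); [lia|].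
  replace (n + m - n)%nat with m by lia. reflexivity.
Qed.

Lemma iter_xpre u y n : Nat.iter n (Bw ww) (xpre u y n) = y.
Proof.
  apply functional_extensionality. intros m. rewrite iter_formula.
  rewrite (Nat.add_comm m n), xpre_hi. rewrite Cmult_assoc, <- RtoC_mult.
  rewrite (Nat.add_comm n m).
  pose proof (W_pos m); pose proof (W_pos (m + n)).
  replace (W (m + n) / W m * (W m / W (m + n))) with 1 by (field; lra).
  apply Cmult_1_l.
Qed.

Lemma rho_nonneg m n : 0 <= W m / W (m + n).
Proof. pose proof (W_pos m); pose proof (W_pos (m + n)). left; apply Rdiv_lt_0_compat; auto. Qed.

Lemma csub_self (a : C) : Cminus a a = RtoC 0.
Proof. ring. Qed.

Lemma stt_c0 : strongly_tt c0 (Bw ww).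
Proof.
  intros U [HUX HUo] [u Hu] y Hy Hy0.
  destruct (HUo u Hu) as [e [He Hball]].
  pose proof (HUX u Hu) as Hux. simpl in Hux, Hy.
  destruct (lim0_eventually _ Hux (e/8)) as [K1 HK1]; [lra|].
  destruct (lim0_eventually _ Hy (e/8)) as [K2 HK2]; [lra|].
  destruct (lim0_bounded _ Hy) as [Y HY].
  assert (HY0 : 0 <= Y) by (pose proof (Cmod_ge_0 (y 0%nat)); pose proof (HY 0%nat); lra).
  set (K := Nat.max K1 K2).
  assert (Hd0 : 0 < e / (8 * (Y + 1))) by (apply Rdiv_lt_0_compat; lra).
  destruct (HH K (e / (8 * (Y + 1))) Hd0) as [n [HKn [H2 Hd]]].
  exists n, (xpre u y n). split; [|apply iter_xpre].
  apply Hball.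
  - simpl. apply (is_lim_seq_incr_n _ n).
    apply is_lim_seq_le_le with (u := fun _ => 0) (w := fun k => 2 * Cmod (y k)).
    + intros k. rewrite (Nat.add_comm k n), xpre_hi, Cmod_scal by apply rho_nonneg.
      split; [apply Rmult_le_pos; [apply rho_nonneg|apply Cmod_ge_0]|].
      apply Rmult_le_compat_r; [apply Cmod_ge_0|apply H2].
    + apply is_lim_seq_const.
    + replace (Finite 0) with (Rbar_mult 2 0) by (simpl; f_equal; ring).
      apply is_lim_seq_scal_l. auto.
  - simpl. apply Rle_lt_trans with (3 * e / 8); [|lra]. apply Lub_le. intros k.
    split; [apply Cmod_ge_0|]. unfold seq_sub.
    destruct (lt_dec k n).
    + rewrite xpre_lo, csub_self, Cmod_0 by auto. lra.
    + replace k with (n + (k - n))%nat by lia. rewrite xpre_hi.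
      set (m := (k - n)%nat).
      eapply Rle_trans; [apply Cmod_sub_le|].
      rewrite Cmod_scal by apply rho_nonneg.
      assert (Cmod (u (n + m)%nat) < e / 8) by (apply HK1; unfold K in *; lia).
      assert (W m / W (m + n) * Cmod (y m) <= 2 * e / 8).
      { destruct (lt_dec m K).
        - specialize (Hd m l). pose proof (HY m).
          apply Rle_trans with (e / (8 * (Y + 1)) * Y).
          + apply Rmult_le_compat; auto; [apply rho_nonneg|apply Cmod_ge_0].
          + apply Rle_trans with (e / 8); [|lra].
            unfold Rdiv. rewrite Rinv_mult. 
            assert (0 < / (Y + 1)) by (apply Rinv_0_lt_compat; lra).
            assert (Y * / (Y + 1) <= 1) by (apply Rmult_le_reg_r with (Y + 1); [lra|];
              rewrite Rmult_assoc, Rinv_l by lra; lra).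
            assert (0 < e * / 8) by lra. nra.
        - assert (Cmod (y m) < e / 8) by (apply HK2; unfold K in *; lia).
          pose proof (H2 m). pose proof (rho_nonneg m n). pose proof (Cmod_ge_0 (y m)). nra. }
      lra.
Qed.

Lemma stt_lp p : 1 <= p -> strongly_tt (lp p) (Bw ww).
Proof.
  intros Hp U [HUX HUo] [u Hu] y Hy Hy0.
  destruct (HUo u Hu) as [e [He Hball]].
  pose proof (HUX u Hu) as Hux. simpl in Hux, Hy.
  set (Yk := fun k => rpow (Cmod (y k)) p) in *.
  set (Uk := fun k => rpow (Cmod (u k)) p) in *.
  set (C2 := rpow 2 p).
  assert (HC2 : 0 < C2) by apply rpow_2pos.
  set (E := rpow e p).
  assert (HE : 0 < E) by (unfold E; rewrite rpow_pos by lra; unfold Rpower; apply exp_pos).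
  assert (HYk : forall k, 0 <= Yk k) by (intros; apply rpow_ge0).
  assert (HUk : forall k, 0 <= Uk k) by (intros; apply rpow_ge0).
  set (SY := Series Yk).
  assert (HSY : 0 <= SY) by (apply Series_nonneg; auto).
  destruct (tail_small Yk HYk Hy (E / (3 * C2 * C2))) as [K1 HK1].
  { apply Rdiv_lt_0_compat; [lra|]. nra. }
  destruct (tail_small Uk HUk Hux (E / (3 * C2))) as [K2 HK2].
  { apply Rdiv_lt_0_compat; lra. }
  set (K := Nat.max (Nat.max K1 K2) 1).
  set (d := Rmin 1 (E / (3 * C2 * (SY + 1)))).
  assert (Hd0 : 0 < d).
  { unfold d. apply Rmin_glb_lt; [lra|]. apply Rdiv_lt_0_compat; [lra|]. nra. }
  assert (Hd1 : d <= 1) by apply Rmin_l.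
  assert (Hd2 : d * (SY + 1) <= E / (3 * C2)).
  { apply Rle_trans with (E / (3 * C2 * (SY + 1)) * (SY + 1)).
    - apply Rmult_le_compat_r; [lra|apply Rmin_r].
    - right. field. lra. }
  destruct (HH K d Hd0) as [n [HKn [H2 Hd]]].
  assert (Hn0 : (0 < n)%nat) by (unfold K in *; lia).
  set (x := xpre u y n).
  set (rho := fun m => W m / W (m + n)).
  assert (Hrho : forall m, 0 <= rho m) by (intros; apply rho_nonneg).
  assert (Hrp : forall m, rpow (rho m) p <= C2).
  { intros m. apply rpow_le; [lra|]. split; auto. apply H2. }
  assert (Hxs : forall k, rpow (Cmod (x (n + k)%nat)) p = rpow (rho k) p * Yk k).
  { intros k. unfold x. rewrite xpre_hi, Cmod_scal by apply rho_nonneg.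
    apply rpow_mult; [apply Hrho|apply Cmod_ge_0]. }
  exists n, x. split; [|apply iter_xpre].
  apply Hball.
  - simpl. apply (ex_series_incr_n _ n).
    apply exR_le with (b := fun k => C2 * Yk k); [|apply exR_scal; auto].
    intros k. rewrite Hxs. split; [apply Rmult_le_pos; [apply rpow_ge0|auto]|].
    apply Rmult_le_compat_r; auto.
  - simpl. set (a := fun k => rpow (Cmod (seq_sub x u k)) p).
    set (t := fun k => if Nat.ltb k K then 0 else Yk k).
    assert (Ht0 : forall k, 0 <= t k) by (intros; unfold t; destruct (Nat.ltb k K); auto; lra).
    assert (HtK : forall k, t (K + k)%nat = Yk (K + k)%nat).
    { intros; unfold t. destruct (Nat.ltb_spec (K + k) K); [lia|auto]. }
    assert (Hext : ex_series t).
    { apply (ex_series_incr_n t K). apply (ex_series_ext (fun k => Yk (K + k)%nat)).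
      - intros; symmetry; auto.
      - apply ex_series_tail; auto. }
    assert (HST : Series t < E / (3 * C2 * C2)).
    { rewrite (Series_incr_n t K) by (unfold K; lia || auto).
      rewrite sum_zero.
      - rewrite (Series_ext _ (fun k => Yk (K + k)%nat)) by auto.
        rewrite Rplus_0_l. apply HK1. unfold K; lia.
      - intros k Hk. unfold t. destruct (Nat.ltb_spec k K); [auto|unfold K in *; lia]. }
    set (Us := fun k => Uk (n + k)%nat).
    assert (HexUs : ex_series Us) by (apply ex_series_tail; auto).
    assert (HSU : Series Us < E / (3 * C2)) by (apply HK2; unfold K in *; lia).
    set (b := fun k => C2 * ((d * Yk k + C2 * t k) + Us k)).
    assert (Hab : forall k, 0 <= a (n + k)%nat <= b k).
    { intros k. split; [apply rpow_ge0|]. unfold a, b, seq_sub, Us, Uk.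
      unfold x at 1. rewrite xpre_hi.
      eapply Rle_trans.
      { apply rpow_le; [lra|]. split; [apply Cmod_ge_0|apply Cmod_sub_le]. }
      rewrite Cmod_scal by apply rho_nonneg.
      eapply Rle_trans; [apply rpow_sum; [lra|apply Rmult_le_pos; [apply rho_nonneg|apply Cmod_ge_0]|apply Cmod_ge_0]|].
      apply Rmult_le_compat_l; [lra|]. apply Rplus_le_compat_r.
      rewrite rpow_mult by (apply rho_nonneg || apply Cmod_ge_0). fold (Yk k).
      fold (rho k). unfold t.
      destruct (Nat.ltb_spec k K).
      - assert (rpow (rho k) p <= d).
        { eapply Rle_trans; [apply rpow_small; auto|apply Hd; auto].
          split; [apply Hrho|]. eapply Rle_trans; [apply Hd; auto|auto]. }
        pose proof (HYk k). nra.
      - pose proof (Hrp k). pose proof (HYk k). pose proof (rpow_ge0 (rho k) p). nra. }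
    assert (Hexb : ex_series b).
    { unfold b. apply exR_scal. apply exR_plus; auto. apply exR_plus; apply exR_scal; auto. }
    assert (Hexa : ex_series a).
    { apply (ex_series_incr_n a n). apply exR_le with (b := b); auto. }
    assert (HSa : Series a <= Series b).
    { rewrite (Series_incr_n a n) by auto.
      rewrite sum_zero.
      - rewrite Rplus_0_l. apply Series_le; auto.
      - intros k Hk. unfold a, seq_sub, x. rewrite xpre_lo by lia.
        rewrite csub_self, Cmod_0. apply rpow_0. }
    assert (HSb : Series b < E).
    { unfold b. rewrite Series_scal_l. rewrite Series_plus; auto;
        [|apply exR_plus; apply exR_scal; auto].
      rewrite Series_plus by (apply exR_scal; auto).
      rewrite !Series_scal_l. fold SY.
      assert (d * SY <= E / (3 * C2)) by nra.
      assert (C2 * (d * SY) <= E / 3).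
      { apply Rle_trans with (C2 * (E / (3 * C2))); [apply Rmult_le_compat_l; lra|].
        right; field; lra. }
      assert (C2 * (C2 * Series t) < E / 3).
      { apply Rlt_le_trans with (C2 * (C2 * (E / (3 * C2 * C2)))).
        - apply Rmult_lt_compat_l; auto. apply Rmult_lt_compat_l; auto.
        - right; field; lra. }
      assert (C2 * Series Us < E / 3).
      { apply Rlt_le_trans with (C2 * (E / (3 * C2))).
        - apply Rmult_lt_compat_l; auto.
        - right; field; lra. }
      lra. }
    assert (HSa0 : 0 <= Series a) by (apply Series_nonneg; auto; intros; apply rpow_ge0).
    fold a. unfold E in *.
    rewrite <- (rpow_inv e p) by lra.
    apply rpow_lt. { apply Rinv_0_lt_compat; lra. }
    split; auto. lra.
Qed.

Definition goodS (S : seqspace) : Prop := forall p, S = lp p -> 1 <= p.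

Lemma coord_le S z k : goodS S -> inX S z -> Cmod (z k) <= normX S z.
Proof.
  intros HS Hz. destruct S as [|p]; simpl in *.
  - destruct (lim0_bounded _ Hz) as [B HB].
    apply (Lub_ge (fun n => Cmod (z n)) B). intros; split; [apply Cmod_ge_0|auto].
  - pose proof (HS p eq_refl) as Hp.
    rewrite <- (rpow_inv (Cmod (z k)) p) by (lra || apply Cmod_ge_0).
    apply rpow_le; [apply Rinv_0_lt_compat; lra|]. split; [apply rpow_ge0|].
    apply (term_le_Series (fun n => rpow (Cmod (z n)) p)); auto. intros; apply rpow_ge0.
Qed.

Lemma inX_sub S x y : goodS S -> inX S x -> inX S y -> inX S (seq_sub x y).
Proof.
  intros HS Hx Hy. destruct S as [|p]; simpl in *; unfold seq_sub.
  - apply is_lim_seq_le_le with (u := fun _ => 0) (w := fun k => Cmod (x k) + Cmod (y k)).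
    + intros k. split; [apply Cmod_ge_0|apply Cmod_sub_le].
    + apply is_lim_seq_const.
    + replace (Finite 0) with (Finite (0 + 0)) by (f_equal; ring).
      apply is_lim_seq_plus'; auto.
  - pose proof (HS p eq_refl) as Hp.
    apply exR_le with (b := fun k => rpow 2 p * (rpow (Cmod (x k)) p + rpow (Cmod (y k)) p)).
    + intros k. split; [apply rpow_ge0|].
      eapply Rle_trans; [apply rpow_le; [lra|]; split; [apply Cmod_ge_0|apply Cmod_sub_le]|].
      apply rpow_sum; [lra|apply Cmod_ge_0|apply Cmod_ge_0].
    + apply exR_scal, exR_plus; auto.
Qed.

Definition zeroseq : nat -> C := fun _ => RtoC 0.
Definition e0 : nat -> C := fun k => match k with O => RtoC 1 | _ => RtoC 0 end.

Lemma inX_zero S : inX S zeroseq.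
Proof.
  destruct S as [|p]; simpl; unfold zeroseq.
  - apply (is_lim_seq_ext (fun _ => 0)); [intros; rewrite Cmod_0; auto|apply is_lim_seq_const].
  - apply (ex_series_ext (fun _ => 0)); [intros; rewrite Cmod_0, rpow_0; auto|apply ex_series_zero].
Qed.

Lemma inX_e0 S : inX S e0.
Proof.
  destruct S as [|p]; simpl.
  - apply (is_lim_seq_incr_n _ 1). apply (is_lim_seq_ext (fun _ => 0)); [|apply is_lim_seq_const].
    intros n. rewrite Nat.add_1_r. simpl. rewrite Cmod_0. auto.
  - apply (ex_series_incr_n _ 1). apply (ex_series_ext (fun _ => 0)); [|apply ex_series_zero].
    intros n. simpl. rewrite Cmod_0, rpow_0. auto.
Qed.

Lemma not_mixing S : goodS S -> ~ mixing S (Bw ww).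
Proof.
  intros HS Hmix.
  set (U0 := fun x => inX S x /\ exists eps, 0 < eps /\ forall k, Cmod (x k) <= / 3 - eps).
  set (V0 := fun x => inX S x /\ Cmod (Cminus (x 0%nat) (RtoC 1)) < / 3).
  assert (HU : openX S U0).
  { split; [intros x [Hx _]; auto|].
    intros x [Hx [eps [Heps Hb]]]. exists (eps / 2). split; [lra|].
    intros z Hz Hn. split; auto. exists (eps / 2). split; [lra|]. intros k.
    pose proof (coord_le S (seq_sub z x) k HS (inX_sub S z x HS Hz Hx)).
    pose proof (Cmod_add_sub (z k) (x k)). pose proof (Hb k). unfold seq_sub in *. lra. }
  assert (HV : openX S V0).
  { split; [intros x [Hx _]; auto|].
    intros x [Hx Hb]. exists (/ 3 - Cmod (Cminus (x 0%nat) (RtoC 1))). split; [lra|].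
    intros z Hz Hn. split; auto.
    pose proof (coord_le S (seq_sub z x) 0 HS (inX_sub S z x HS Hz Hx)).
    unfold seq_sub in *.
    replace (Cminus (z 0%nat) (RtoC 1)) with
      (Cplus (Cminus (z 0%nat) (x 0%nat)) (Cminus (x 0%nat) (RtoC 1))) by ring.
    pose proof (Cmod_triangle (Cminus (z 0%nat) (x 0%nat)) (Cminus (x 0%nat) (RtoC 1))). lra. }
  assert (HUn : nonempty U0).
  { exists zeroseq. split; [apply inX_zero|]. exists (/ 3). split; [lra|].
    intros k. unfold zeroseq. rewrite Cmod_0. lra. }
  assert (HVn : nonempty V0).
  { exists e0. split; [apply inX_e0|]. simpl. rewrite csub_self, Cmod_0. lra. }
  destruct (Hmix U0 V0 HU HUn HV HVn) as [N HN].
  destruct (returns N) as [r [Hr HWr]].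
  destruct (HN r Hr) as [x [[_ [eps [Heps Hb]]] [_ Hv]]].
  rewrite iter_formula in Hv. simpl Nat.add in Hv. rewrite HWr, W_0 in Hv.
  replace (1 / 1) with 1 in Hv by field. rewrite Cmult_1_l in Hv.
  pose proof (Cmod_add_sub (RtoC 1) (x r)).
  rewrite Cmod_1 in H.
  replace (Cminus (RtoC 1) (x r)) with (Copp (Cminus (x r) (RtoC 1))) in H by ring.
  rewrite Cmod_opp in H. pose proof (Hb r). lra.
Qed.

Theorem theorem1p1 (S : seqspace) (HS : forall p, S = lp p -> 1 <= p) :
  exists w : nat -> R,
    (forall n, 0 < w n) /\ (exists M, forall n, w n <= M) /\
    strongly_tt S (Bw w) /\ ~ mixing S (Bw w).
Proof.
  exists ww. split; [apply ww_pos|]. split; [exists 2; apply ww_le|]. split.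
  - destruct S as [|p]; [apply stt_c0|apply stt_lp; apply HS; auto].
  - apply not_mixing. exact HS.
Qed.
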